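(* The eigenvalues of $\mathcal F_\omega^{-1}\mathcal R$ cluster at $0$ from the right half-plane as $\omega\to+\infty$. Precisely: for every $\delta>0$ there is $\Omega>0$ such that, for every $\omega>\Omega$, every eigenvalue $\eta$ of $\mathcal F_\omega^{-1}\mathcal R$ satisfies $$0<\operatorname{Re}\eta<\delta\quad\text{and}\quad|\operatorname{Im}\eta|<\delta .$$
   Context: Let $M\ge 1$ be an integer and let $I$ denote an identity matrix of the appropriate size. Let $T\in\mathbb R^{M\times M}$ be real symmetric positive definite. Let $D\in\mathbb R^{M\times M}$ be diagonal with nonnegative diagonal entries. Define the block matrices in $\mathbb R^{2M\times 2M}$: $$\mathcal R=\begin{bmatrix} I & T-D\\ D-T & I\end{bmatrix},\qquad \mathcal T=\begin{bmatrix} I & T\\ -T & I\end{bmatrix},\qquad \mathcal D=\begin{bmatrix} 0 & -D\\ D & 0\end{bmatrix}.$$ Thus $\mathcal R=\mathcal T+\mathcal D$. For $\omega>0$, the NASS preconditioner is $$\mathcal F_\omega=\tfrac{1}{2\omega}(\omega I+\mathcal T)(\omega I+\mathcal D).$$ *)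

(* Defs.v *)
From HB Require Import structures.
From mathcomp Require Import all_boot all_order all_algebra.
From mathcomp Require Import reals.
From mathcomp Require Import complex.
Set Implicit Arguments. Unset Strict Implicit. Unset Printing Implicit Defensive.
Import Order.TTheory GRing.Theory Num.Theory.
Local Open Scope ring_scope.

Definition sym_posdef (R : realType) (n : nat) (T : 'M[R]_n) : Prop :=
  T^T = T /\ (forall x : 'cV[R]_n, x != 0 -> 0 < (x^T *m T *m x) 0 0).

Definition nonneg_diag (R : realType) (n : nat) (D : 'M[R]_n) : Prop :=
  is_diag_mx D /\ (forall i, 0 <= D i i).

Definition calR (R : realType) (n : nat) (T D : 'M[R]_n) : 'M[R]_(n + n) :=
  block_mx 1%:M (T - D) (D - T) 1%:M.

Definition calT (R : realType) (n : nat) (T : 'M[R]_n) : 'M[R]_(n + n) :=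
  block_mx 1%:M T (- T) 1%:M.

Definition calD (R : realType) (n : nat) (D : 'M[R]_n) : 'M[R]_(n + n) :=
  block_mx 0 (- D) D 0.

Definition NASS (R : realType) (n : nat) (T D : 'M[R]_n) (w : R) : 'M[R]_(n + n) :=
  (2 * w)^-1 *: ((w%:M + calT T) *m (w%:M + calD D)).

Definition precond_C (R : realType) (n : nat) (T D : 'M[R]_n) (w : R)
  : 'M[R[i]]_(n + n) :=
  map_mx (fun x => (x%:C)%C) (invmx (NASS T D w) *m calR T D).

(* Main.v *)
Require Import Defs.
From HB Require Import structures.
From mathcomp Require Import all_boot all_order all_algebra.
From mathcomp Require Import reals complex ring lra.
Set Implicit Arguments. Unset Strict Implicit. Unset Printing Implicit Defensive.
Import Order.TTheory GRing.Theory Num.Theory.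
Local Open Scope ring_scope.

Section Quad.
Variables (R : realType) (n : nat).
Implicit Types (v w : 'rV[R]_n) (A B : 'M[R]_n).

Definition qf v w A := (v *m A *m w^T) 0 0.
Definition sqn v := \sum_i v 0 i ^+ 2.
Definition l1 A := \sum_j \sum_i `|A i j|.

Lemma qfE v w A : qf v w A = \sum_j \sum_i v 0 i * A i j * w 0 j.
Proof.
rewrite /qf mxE; apply: eq_bigr => j _; rewrite !mxE mulr_suml.
by [].
Qed.

Lemma qfD v w A B : qf v w (A + B) = qf v w A + qf v w B.
Proof. by rewrite /qf mulmxDr mulmxDl mxE. Qed.

Lemma qfZ v w a A : qf v w (a *: A) = a * qf v w A.
Proof. by rewrite /qf -scalemxAr -scalemxAl mxE. Qed.

Lemma qfN v w A : qf v w (- A) = - qf v w A.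
Proof. by rewrite -scaleN1r qfZ mulN1r. Qed.

Lemma qf1 v : qf v v 1%:M = sqn v.
Proof.
rewrite /qf mulmx1 mxE /sqn; apply: eq_bigr => i _; by rewrite !mxE expr2.
Qed.

Lemma qfT v w A : qf w v A = qf v w A^T.
Proof.
rewrite /qf; transitivity ((w *m A *m v^T)^T 0 0); first by rewrite [in RHS]mxE.
by rewrite !trmx_mul trmxK mulmxA.
Qed.

Lemma sqn_ge0 v : 0 <= sqn v.
Proof. by apply: sumr_ge0 => i _; rewrite sqr_ge0. Qed.

Lemma sqn_gt0 v : v != 0 -> 0 < sqn v.
Proof.
move=> nz; have [i vi] : exists i, v 0 i != 0.
  apply/existsP; apply: contraR nz => /existsPn H; apply/eqP/matrixP => a b.
  by rewrite !ord1 mxE; apply/eqP; move: (H b); rewrite negbK.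
rewrite /sqn (bigD1 i) //=; apply: ltr_pwDl.
  by rewrite lt_def sqr_ge0 sqrf_eq0 vi.
by apply: sumr_ge0 => j _; rewrite sqr_ge0.
Qed.

Lemma sqn_le v i : v 0 i ^+ 2 <= sqn v.
Proof.
rewrite /sqn (bigD1 i) //= lerDl; by apply: sumr_ge0 => j _; rewrite sqr_ge0.
Qed.

Lemma qf_bound v w A : `|qf v w A| <= l1 A * (sqn v + sqn w).
Proof.
rewrite qfE /l1 mulr_suml; apply: (le_trans (ler_norm_sum _ _ _)).
apply: ler_sum => j _; rewrite mulr_suml.
apply: (le_trans (ler_norm_sum _ _ _)); apply: ler_sum => i _.
have h1 := sqn_le v i; have h2 := sqn_le w j.
rewrite -mulrA mulrC !normrM.
have hA : 0 <= `|A i j| by [].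
have : `|v 0 i| * `|w 0 j| <= sqn v + sqn w.
  have e1 : `|v 0 i| ^+ 2 = v 0 i ^+ 2 by rewrite real_normK ?num_real.
  have e2 : `|w 0 j| ^+ 2 = w 0 j ^+ 2 by rewrite real_normK ?num_real.
  have := normr_ge0 (v 0 i); have := normr_ge0 (w 0 j). nra.
move=> H; have h3 := normr_ge0 (A i j).
have -> : `|A i j| * `|w 0 j| * `|v 0 i| = `|A i j| * (`|v 0 i| * `|w 0 j|) by ring.
by apply: ler_wpM2l.
Qed.

Lemma qf_skew v A : A^T = - A -> qf v v A = 0.
Proof.
move=> h; have := qfT v v A; rewrite h qfN => e.
by apply/eqP; rewrite -[_ == 0](mulrn_eq0 _ 2) mulr2n {1}e addNr.
Qed.

End Quad.

Section Core.
Variables (R : realType) (n : nat).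

Lemma qf_apply (v a b w : 'rV[R]_n) (A B : 'M[R]_n) (x y : R) :
  v *m A = x *: (a *m B) - y *: (b *m B) ->
  qf v w A = x * qf a w B - y * qf b w B.
Proof.
move=> E; rewrite /qf E mulmxBl -!scalemxAl.
by rewrite [in LHS]mxE [X in X + _]mxE [X in _ + X]mxE [X in - X]mxE.
Qed.

Lemma qf_apply2 (v a b w : 'rV[R]_n) (A B : 'M[R]_n) (x y : R) :
  v *m A = x *: (a *m B) + y *: (b *m B) ->
  qf v w A = x * qf a w B + y * qf b w B.
Proof.
move=> E; have E' : v *m A = x *: (a *m B) - (- y) *: (b *m B) by rewrite scaleNr opprK.
by rewrite (qf_apply _ E') mulNr opprK.
Qed.

Lemma qfG (v u : 'rV[R]_n) (Rm P : 'M[R]_n) (w : R) :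
  qf v u ((w ^+ 2)%:M + w *: Rm + P) = w ^+ 2 * qf v u 1%:M + w * qf v u Rm + qf v u P.
Proof. by rewrite !qfD qfZ -scalemx1 qfZ. Qed.

Lemma qf_R (v : 'rV[R]_n) (Rm : 'M[R]_n) :
  (Rm - 1%:M)^T = - (Rm - 1%:M) -> qf v v Rm = sqn v.
Proof.
move=> h; have -> : Rm = 1%:M + (Rm - 1%:M) by rewrite addrC subrK.
by rewrite qfD qf1 qf_skew // addr0.
Qed.

Lemma core (Rm P : 'M[R]_n) (w x y : R) (a b : 'rV[R]_n) :
  (Rm - 1%:M)^T = - (Rm - 1%:M) ->
  a *m Rm = x *: (a *m ((w ^+ 2)%:M + w *: Rm + P)) - y *: (b *m ((w ^+ 2)%:M + w *: Rm + P)) ->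
  b *m Rm = x *: (b *m ((w ^+ 2)%:M + w *: Rm + P)) + y *: (a *m ((w ^+ 2)%:M + w *: Rm + P)) ->
  let N := sqn a + sqn b in
  let s := qf b a Rm - qf a b Rm in
  let e1 := qf a a P + qf b b P in
  let e2 := qf b a P - qf a b P in
  N = x * (w ^+ 2 * N + w * N + e1) - y * (w * s + e2) /\
  s = x * (w * s + e2) + y * (w ^+ 2 * N + w * N + e1).
Proof.
move=> sk Ea Eb N s e1 e2.
have h1 := qf_apply a Ea; have h2 := qf_apply2 b Eb.
have h3 := qf_apply b Ea; have h4 := qf_apply2 a Eb.
move: h1 h2 h3 h4; rewrite !qfG !qf1 !(qf_R _ sk).
have -> : qf b a 1%:M = qf a b 1%:M by rewrite qfT trmx1.
rewrite /N /s /e1 /e2.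
move=> q1 q2 q3 q4; split; lra.
Qed.

End Core.
Section Cx.
Variable R : realType.
Lemma Re_sum n (u : 'I_n -> R[i]) (z : 'I_n -> R) :
  complex.Re (\sum_k u k * (z k)%:C)%C = \sum_k complex.Re (u k) * z k.
Proof.
elim/big_rec2: _ => // k y1 y2 _ <-.
by case: (u k) => p q; case: y2 => r t /=; rewrite mulr0 subr0.
Qed.
Lemma Im_sum n (u : 'I_n -> R[i]) (z : 'I_n -> R) :
  complex.Im (\sum_k u k * (z k)%:C)%C = \sum_k complex.Im (u k) * z k.
Proof.
elim/big_rec2: _ => // k y1 y2 _ <-.
by case: (u k) => p q; case: y2 => r t /=; rewrite mulr0 add0r.
Qed.
Lemma Re_mul (e u : R[i]) : complex.Re (e * u) = complex.Re e * complex.Re u - complex.Im e * complex.Im u.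
Proof. by case: e => p q; case: u. Qed.
Lemma Im_mul (e u : R[i]) : complex.Im (e * u) = complex.Re e * complex.Im u + complex.Im e * complex.Re u.
Proof. by case: e => p q; case: u => r t /=; rewrite addrC. Qed.
End Cx.
Lemma scal (R : realType) (N s e1 e2 x y w K c d : R) :
  0 < N -> 0 <= K -> 0 <= c -> `|s| <= c * N -> `|e1| <= K * N -> `|e2| <= K * N ->
  0 < d -> 1 + 2 * K * (1 + c) + 16 * (1 + c ^+ 2) / d ^+ 2 < w ->
  N = x * (w ^+ 2 * N + w * N + e1) - y * (w * s + e2) ->
  s = x * (w * s + e2) + y * (w ^+ 2 * N + w * N + e1) ->
  0 < 2 * w * x < d /\ `|2 * w * y| < d.
Proof.
move=> N0 K0 c0 hs he1 he2 d0 hw E1 E2.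
set g1 := w ^+ 2 * N + w * N + e1 in E1 E2.
set g2 := w * s + e2 in E1 E2.
set A := 16 * (1 + c ^+ 2) / d ^+ 2 in hw.
have d2 : 0 < d ^+ 2 by rewrite exprn_gt0.
have hA : A * d ^+ 2 = 16 * (1 + c ^+ 2) by rewrite /A mulfVK // gt_eqF.
have A0 : 0 <= A by rewrite /A; apply: divr_ge0; [have := sqr_ge0 c; lra | exact: ltW].
have KcK : 0 <= K * c by rewrite mulr_ge0.
have w1 : 1 < w by lra.
have ww : w < w ^+ 2 by rewrite expr2; nra.
move: hs he1 he2; rewrite !ler_norml => /andP[s1 s2] /andP[e11 e12] /andP[e21 e22].
have g1p : N * w ^+ 2 / 2 <= g1 by rewrite /g1; nra.
have g1pos : 0 < g1.
  apply: lt_le_trans g1p; apply: divr_gt0 => //; rewrite mulr_gt0 //; nra.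
have num : 0 < N * g1 + s * g2.
  have : - (c * N) * (K * N) <= s * e2.
    have : `|s * e2| <= c * N * (K * N).
      rewrite normrM; apply: ler_pM; rewrite ?normr_ge0 // ler_norml; apply/andP; split; lra.
    rewrite ler_norml => /andP[h _]; lra.
  rewrite /g1 /g2; nra.
clearbody g1 g2.
have key1 : x * (g1 ^+ 2 + g2 ^+ 2) = N * g1 + s * g2.
  rewrite E1 E2; ring.
have key2 : (x ^+ 2 + y ^+ 2) * (g1 ^+ 2 + g2 ^+ 2) = N ^+ 2 + s ^+ 2.
  rewrite E1 E2; ring.
have G0 : 0 < g1 ^+ 2 + g2 ^+ 2.
  have := sqr_ge0 g2; have : 0 < g1 ^+ 2 by rewrite exprn_gt0. lra.
have xp : 0 < x.
  have : 0 < x * (g1 ^+ 2 + g2 ^+ 2) by rewrite key1.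
  by rewrite pmulr_lgt0.
have s2c : s ^+ 2 <= c ^+ 2 * N ^+ 2 by nra.
have main : (2 * w * x) ^+ 2 + (2 * w * y) ^+ 2 < d ^+ 2.
  have lhs : ((2 * w * x) ^+ 2 + (2 * w * y) ^+ 2) * (g1 ^+ 2 + g2 ^+ 2) <= 4 * w ^+ 2 * (1 + c ^+ 2) * N ^+ 2.
    have -> : ((2 * w * x) ^+ 2 + (2 * w * y) ^+ 2) * (g1 ^+ 2 + g2 ^+ 2) = 4 * w ^+ 2 * ((x ^+ 2 + y ^+ 2) * (g1 ^+ 2 + g2 ^+ 2)) by ring.
    rewrite key2; have : 0 <= w ^+ 2 by rewrite sqr_ge0. nra.
  have g1sq : (N * w ^+ 2 / 2) ^+ 2 <= g1 ^+ 2.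
    rewrite ler_pXn2r ?nnegrE //; last exact: ltW.
    apply: divr_ge0 => //; rewrite mulr_ge0 ?sqr_ge0 //; exact: ltW.
  have rhs : 4 * w ^+ 2 * (1 + c ^+ 2) * N ^+ 2 < d ^+ 2 * (g1 ^+ 2 + g2 ^+ 2).
    have : d ^+ 2 * (N * w ^+ 2 / 2) ^+ 2 <= d ^+ 2 * (g1 ^+ 2 + g2 ^+ 2).
      rewrite ler_pM2l //; have := sqr_ge0 g2; lra.
    apply: lt_le_trans.
    have -> : d ^+ 2 * (N * w ^+ 2 / 2) ^+ 2 = (d ^+ 2 * w ^+ 2) * (N ^+ 2 * w ^+ 2) / 4 by field.
    have hdw : 16 * (1 + c ^+ 2) < d ^+ 2 * w ^+ 2.
      rewrite -hA; have : A < w ^+ 2 by lra. nra.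
    have p : 0 < N ^+ 2 * w ^+ 2 by rewrite mulr_gt0 ?exprn_gt0 //; lra.
    nra.
  have := le_lt_trans lhs rhs.
  set Z := (2 * w * x) ^+ 2 + (2 * w * y) ^+ 2 => H.
  by rewrite -(ltr_pM2r G0).
have w0 : 0 < w by lra.
have wx : 0 < 2 * w * x by apply: mulr_gt0 => //; apply: mulr_gt0.
have xx : 2 * w * x < d.
  have h : (2 * w * x) ^+ 2 < d ^+ 2 by have := sqr_ge0 (2 * w * y); lra.
  by move: h; rewrite ltr_pXn2r ?nnegrE ?ltW.
split.
  by apply/andP; split.
have h : `|2 * w * y| ^+ 2 < d ^+ 2.
  rewrite real_normK ?num_real //; have := sqr_ge0 (2 * w * x); lra.
by move: h; rewrite ltr_pXn2r ?nnegrE ?normr_ge0 ?ltW.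
Qed.

Section Mats.
Variables (R : realType) (M : nat).

Lemma diag_tr (D : 'M[R]_M) : is_diag_mx D -> D^T = D.
Proof.
move=> /is_diag_mxP hD; apply/matrixP => i j; rewrite mxE.
case: (eqVneq i j) => [->//|ne]; rewrite !hD //; by rewrite eq_sym.
Qed.

Lemma calR_skew (T D : 'M[R]_M) : T^T = T -> D^T = D ->
  (calR T D - 1%:M)^T = - (calR T D - 1%:M).
Proof.
move=> hT hD; rewrite /calR (scalar_mx_block M M) opp_block_mx add_block_mx.
rewrite tr_block_mx opp_block_mx !subrr !trmx0 oppr0 !addr0 !opprB.
by rewrite !raddfB /= hT hD.
Qed.

Lemma NASS_E (T D : 'M[R]_M) (w : R) :
  NASS T D w = (2 * w)^-1 *: ((w ^+ 2)%:M + w *: calR T D + calT T *m calD D).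
Proof.
rewrite /NASS; congr (_ *: _).
rewrite mulmxDl !mulmxDr -scalar_mxM mul_scalar_mx mul_mx_scalar -expr2.
have -> : calR T D = calT T + calD D.
  rewrite /calR /calT /calD add_block_mx !addr0 addrC.
  by congr block_mx; rewrite addrC.
rewrite scalerDr !addrA; congr (_ + _); rewrite -!addrA; congr (_ + _); exact: addrC.
Qed.

End Mats.

Section Unit.
Variables (R : realType) (n : nat).

Lemma l1_ge0 (A : 'M[R]_n) : 0 <= l1 A.
Proof. by apply: sumr_ge0 => j _; apply: sumr_ge0 => i _. Qed.

Lemma G_unit (Rm P : 'M[R]_n) (w : R) :
  (Rm - 1%:M)^T = - (Rm - 1%:M) -> 0 <= w -> 2 * l1 P < w ^+ 2 ->
  ((w ^+ 2)%:M + w *: Rm + P) \in unitmx.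
Proof.
move=> sk w0 hw; rewrite unitmxE unitfE; apply/negP => /det0P [v vnz vG].
have q : qf v v ((w ^+ 2)%:M + w *: Rm + P) = 0 by rewrite /qf vG mul0mx mxE.
rewrite qfG qf1 (qf_R _ sk) in q.
have hb := qf_bound v v P; have hs := sqn_gt0 vnz.
move: hb; rewrite ler_norml => /andP[h1 h2].
have : 0 <= w * sqn v by rewrite mulr_ge0 // ltW.
nra.
Qed.
End Unit.

Theorem theorem4p2 (R : realType) (M : nat) (T D : 'M[R]_M) :
  (1 <= M)%N -> sym_posdef T -> nonneg_diag D ->
  forall delta : R, 0 < delta ->
  exists Omega : R, 0 < Omega /\
    forall w : R, Omega < w ->
    forall eta : R[i], eigenvalue (precond_C T D w) eta ->
      0 < complex.Re eta < delta /\ `|complex.Im eta| < delta.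
Proof.
move=> _ [hT _] [hDd _] delta d0.
have hD := diag_tr hDd.
have sk := calR_skew hT hD.
set Rm := calR T D in sk *.
set P := calT T *m calD D.
set c := 2 * l1 Rm; set K := 2 * l1 P.
have c0 : 0 <= c by rewrite /c mulr_ge0 ?l1_ge0.
have K0 : 0 <= K by rewrite /K mulr_ge0 ?l1_ge0.
have A0 : 0 <= 16 * (1 + c ^+ 2) / delta ^+ 2.
  apply: divr_ge0; [have := sqr_ge0 c; lra | by rewrite ltW // exprn_gt0].
have KcK : 0 <= K * c by rewrite mulr_ge0.
exists (1 + 2 * K * (1 + c) + 16 * (1 + c ^+ 2) / delta ^+ 2); split; first lra.
move=> w hw eta /eigenvalueP [u hu unz].
have w1 : 1 < w by lra.
have w0 : 0 < w by lra.
have ww : w < w ^+ 2 by rewrite expr2; nra.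
set G := (w ^+ 2)%:M + w *: Rm + P.
have Gu : G \in unitmx by apply: G_unit => //; [exact: ltW | rewrite -/K; lra].
have FE : NASS T D w = (2 * w)^-1 *: G by rewrite NASS_E.
have Fu : NASS T D w \in unitmx.
  by rewrite FE unitmxZ // unitfE invr_eq0 mulf_neq0 // gt_eqF.
set F := NASS T D w in FE Fu.
set X := complex.Re eta; set Y := complex.Im eta.
set a := map_mx (@complex.Re R) u; set b := map_mx (@complex.Im R) u.
set Z := invmx F *m Rm.
have ha : a *m Z = X *: a - Y *: b.
  apply/matrixP => i j; have := congr1 (fun m : 'M[R[i]]_(1, M + M) => complex.Re (m i j)) hu.
  rewrite /precond_C !mxE -/F -/Rm -/Z => e.
  rewrite (_ : \sum_j0 a i j0 * Z j0 j = \sum_k complex.Re (u i k) * Z k j); last first.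
    by apply: eq_bigr => k _; rewrite mxE.
  rewrite -Re_sum -Re_mul -e; congr complex.Re; apply: eq_bigr => k _.
  by rewrite [in RHS]mxE.
have hb : b *m Z = X *: b + Y *: a.
  apply/matrixP => i j; have := congr1 (fun m : 'M[R[i]]_(1, M + M) => complex.Im (m i j)) hu.
  rewrite /precond_C !mxE -/F -/Rm -/Z => e.
  rewrite (_ : \sum_j0 b i j0 * Z j0 j = \sum_k complex.Im (u i k) * Z k j); last first.
    by apply: eq_bigr => k _; rewrite mxE.
  rewrite -Im_sum -Im_mul -e; congr complex.Im; apply: eq_bigr => k _.
  by rewrite [in RHS]mxE.
set al := a *m invmx F; set be := b *m invmx F.
have aF : a = al *m F by rewrite /al mulmxKV.
have bF : b = be *m F by rewrite /be mulmxKV.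
have Ea : al *m Rm = (X / (2 * w)) *: (al *m G) - (Y / (2 * w)) *: (be *m G).
  rewrite (_ : al *m Rm = a *m Z); last by rewrite /Z mulmxA.
  by rewrite ha {1}aF {1}bF FE -!scalemxAr !scalerA.
have Eb : be *m Rm = (X / (2 * w)) *: (be *m G) + (Y / (2 * w)) *: (al *m G).
  rewrite (_ : be *m Rm = b *m Z); last by rewrite /Z mulmxA.
  by rewrite hb {1}aF {1}bF FE -!scalemxAr !scalerA.
have nz : al != 0 \/ be != 0.
  case: (eqVneq al 0) => [a0|]; last by left.
  case: (eqVneq be 0) => [b0|]; last by right.
  exfalso; move/negP: unz; apply; apply/eqP/matrixP => i j.
  have ha0 : a i j = 0 by rewrite aF a0 mul0mx mxE.
  have hb0 : b i j = 0 by rewrite bF b0 mul0mx mxE.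
  move: ha0 hb0; rewrite !mxE; case: (u i j) => p q /= -> ->; by [].
have [E1 E2] := core sk Ea Eb.
set N := sqn al + sqn be in E1 E2.
set s := qf be al Rm - qf al be Rm in E1 E2.
set e1 := qf al al P + qf be be P in E1 E2.
set e2 := qf be al P - qf al be P in E1 E2.
have N0 : 0 < N.
  rewrite /N; have := sqn_ge0 al; have := sqn_ge0 be.
  by case: nz => /sqn_gt0; lra.
have hs : `|s| <= c * N.
  rewrite /s; apply: le_trans (ler_normB _ _) _.
  have := qf_bound be al Rm; have := qf_bound al be Rm; rewrite /c /N; lra.
have he1 : `|e1| <= K * N.
  rewrite /e1; apply: le_trans (ler_normD _ _) _.
  have := qf_bound al al P; have := qf_bound be be P; rewrite /K /N; lra.
have he2 : `|e2| <= K * N.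
  rewrite /e2; apply: le_trans (ler_normB _ _) _.
  have := qf_bound be al P; have := qf_bound al be P; rewrite /K /N; lra.
have [h1 h2] := scal N0 K0 c0 hs he1 he2 d0 hw E1 E2.
have w2 : 2 * w != 0 by rewrite mulf_neq0 // gt_eqF.
by move: h1 h2; rewrite ![2 * w * (_ / _)]mulrC !divfK.
Qed.
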